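(* Let $h$ be an admissible perturbation. There exist constants $\overline C_e<C_e$, $e\in\mathcal E$, depending only on $h$ and the network (not on $\eta$), such that for every $\eta>0$ there is $t_0\ge0$ with the following property: for every admissible initial condition, the solution of the dynamics with rate $\eta$ satisfies $f^\pi_e(t)=(A\pi(t))_e\le\overline C_e$ for all $t\ge t_0$ and all $e\in\mathcal E$.
   Context: Network: $\mathcal G=(\mathcal V,\mathcal E)$ is a finite directed graph with $\mathcal V=\{0,1,\dots,n\}$, containing no directed cycle, in which node $0$ is the unique node with no incoming link, node $n$ is the unique node with no outgoing link, there is a directed path from every node to $n$, and every link $(u,v)\in\mathcal E$ satisfies $u<v$. For $v\in\mathcal V$, $\mathcal E_v^-$ and $\mathcal E_v^+$ are the sets of links entering and leaving $v$. Each link $e$ has a flow-density function $\mu_e:[0,\infty)\to[0,\infty)$ that is continuously differentiable, strictly increasing, strictly concave, with $\mu_e(0)=0$ and $\mu_e'(0)<\infty$; its capacity is $C_e:=\lim_{\rho\to\infty}\mu_e(\rho)\in(0,+\infty]$. Put $\mathcal F_v:=\prod_{e\in\mathcal E_v^+}[0,C_e)$, $\mathcal F:=\prod_{e\in\mathcal E}[0,C_e)$, and $\mu(\rho):=(\mu_e(\rho_e))_{e\in\mathcal E}$. The delay is $T_e(f_e)=\mu_e^{-1}(f_e)/f_e$ for $0<f_e<C_e$, $T_e(0)=1/\mu_e'(0)$, $T_e(f_e)=+\infty$ for $f_e\ge C_e$; $T(f):=(T_e(f_e))_e$. $\mathcal P$ is the set of directed paths from $0$ to $n$, $A\in\{0,1\}^{\mathcal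 E\times\mathcal P}$ the link-path incidence matrix ($A_{ep}=1$ iff $e\in p$), $\mathcal S(\mathcal P)=\{\pi\in\mathbb R_+^{\mathcal P}:\sum_p\pi_p=1\}$, $\Pi:=\{\pi\in\mathcal S(\mathcal P):(A\pi)_e<C_e\ \forall e\}$, and $f^\pi:=A\pi$. The min-cut capacity $C^*:=\min\{\sum_{(u,v)\in\mathcal E:u\in\mathcal U,v\notin\mathcal U}C_{(u,v)}:\mathcal U\subseteq\mathcal V,0\in\mathcal U,n\notin\mathcal U\}$ is assumed to satisfy $C^*>1$. Perturbation: $\Phi:=I-|\mathcal P|^{-1}\mathbf 1\mathbf 1'$; interiors $\mathrm{int}$ and boundaries $\partial$ of subsets of $\mathcal S(\mathcal P)$ are relative to the hyperplane $\{x:\mathbf 1'x=1\}$. An admissible perturbation is a function $h:\Pi_h\to\mathbb R$, where $\Pi_h\subseteq\Pi$ is closed in $\mathbb R^{\mathcal P}$, convex, with nonempty interior, $h$ is strictly convex, twice differentiable on $\mathrm{int}(\Pi_h)$, and $\|\tilde\nabla h(\pi)\|\to+\infty$ as $\pi\to\partial\Pi_h$, where $\tilde\nabla h:=\Phi\nabla h$. Its perturbed best response is $F^h(f):=\arg\min_{\omega\in\Pi_h}\{\omega'A'T(f)+h(\omega)\}$ for $f\in\mathcal F$. Local decisions: for each $v\in\{0,\dots,n-1\}$ a continuously differentiable $G^v:\mathcal F_v\times\Pi\to\mathcal S(\mathcal E_v^+)$ is given such that (consistency) $(\sum_{j\in\mathcal E_v^+}f^\pi_j)\,G^v_e(f^\pi_{\mathcal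 E_v^+},\pi)=f^\pi_e$ for all $\pi\in\Pi$, $e\in\mathcal E_v^+$; and (cooperativity) $\partial G^v_j(f_{\mathcal E_v^+},\pi)/\partial f_e\ge0$ for all $\pi\in\Pi$, $f_{\mathcal E_v^+}\in\mathcal F_v$, $j\neq e\in\mathcal E_v^+$. For $f\in\mathcal F$, $\pi\in\Pi$, $e\in\mathcal E_v^+$: $H_e(f,\pi):=G^v_e(f_{\mathcal E_v^+},\pi)-f_e$ if $v=0$, and $H_e(f,\pi):=(\sum_{j\in\mathcal E_v^-}f_j)G^v_e(f_{\mathcal E_v^+},\pi)-f_e$ if $1\le v<n$. Dynamics: for $\eta>0$, $\dot\pi=\eta(F^h(f)-\pi)$, $\dot\rho=H(f,\pi)$, $f=\mu(\rho)$. An admissible initial condition is $\pi(0)\in\Pi$ with all entries positive and $\rho(0)\in(0,\infty)^{\mathcal E}$; $(\pi(t),\rho(t))_{t\ge0}$ denotes the (unique, global) solution, $f(t):=\mu(\rho(t))$, $f^\pi(t):=A\pi(t)$. *)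

(* Defs.v *)
(* Vectors indexed by links / paths
   are functions edge -> R / path -> R; only their values on the links of E /
   the paths of Ps are meaningful. *)
From Stdlib Require Import Reals List Bool.
Import ListNotations.
Open Scope R_scope.

Definition edge := (nat * nat)%type.
Definition path := list edge.

Fixpoint sumL {A : Type} (l : list A) (f : A -> R) : R :=
  match l with [] => 0 | a :: l' => f a + sumL l' f end.

Definition edge_eqb (e e' : edge) : bool :=
  Nat.eqb (fst e) (fst e') && Nat.eqb (snd e) (snd e').
Definition memb (e : edge) (p : path) : bool := existsb (edge_eqb e) p.

Fixpoint is_path (E : list edge) (u w : nat) (p : path) : Prop :=
  match p with
  | [] => u = w
  | e :: p' => In e E /\ fst e = u /\ is_path E (snd e) w p'
  end.

Definition Eout (E : list edge) (v : nat) : list edge :=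
  filter (fun e => Nat.eqb (fst e) v) E.
Definition Ein (E : list edge) (v : nat) : list edge :=
  filter (fun e => Nat.eqb (snd e) v) E.

(* the standing assumptions on the graph G = ({0..n}, E);
   acyclicity follows from u < v for every link (u,v) *)
Definition network (n : nat) (E : list edge) : Prop :=
  NoDup E /\
  (forall e, In e E -> (fst e < snd e)%nat /\ (snd e <= n)%nat) /\
  (forall e, In e E -> snd e <> 0%nat) /\
  (forall v, (1 <= v <= n)%nat -> exists e, In e E /\ snd e = v) /\
  (forall e, In e E -> fst e <> n) /\
  (forall v, (v < n)%nat -> exists e, In e E /\ fst e = v) /\
  (forall v, (v <= n)%nat -> exists p, is_path E v n p).

Definition paths_spec (n : nat) (E : list edge) (Ps : list path) : Prop :=
  NoDup Ps /\ forall p, In p Ps <-> is_path E 0%nat n p.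

(* flow-density function: C^1 on [0,oo) (one-sided at 0), strictly increasing,
   strictly concave, mu(0)=0.  (mu'(0) < oo is automatic: dm 0 is a real.) *)
Definition strictly_increasing0 (m : R -> R) : Prop :=
  forall x y, 0 <= x -> x < y -> m x < m y.
Definition strictly_concave0 (m : R -> R) : Prop :=
  forall x y l, 0 <= x -> 0 <= y -> x <> y -> 0 < l < 1 ->
    l * m x + (1 - l) * m y < m (l * x + (1 - l) * y).
Definition C1_halfline (m : R -> R) : Prop :=
  exists dm : R -> R,
    (forall x, 0 <= x -> forall eps, 0 < eps -> exists del, 0 < del /\
       forall y, 0 <= y -> Rabs (y - x) < del ->
         Rabs (m y - m x - dm x * (y - x)) <= eps * Rabs (y - x)) /\
    (forall x, 0 <= x -> forall eps, 0 < eps -> exists del, 0 < del /\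
       forall y, 0 <= y -> Rabs (y - x) < del -> Rabs (dm y - dm x) < eps).
Definition flow_density (m : R -> R) : Prop :=
  m 0 = 0 /\ strictly_increasing0 m /\ strictly_concave0 m /\ C1_halfline m.

(* x < C := lim_{rho -> oo} m rho  (m increasing, so the limit is the sup) *)
Definition lt_cap (m : R -> R) (x : R) : Prop := exists r, 0 <= r /\ x < m r.

Definition Aop (Ps : list path) (x : path -> R) (e : edge) : R :=
  sumL Ps (fun p => if memb e p then x p else 0).

Definition InPi (E : list edge) (Ps : list path) (mu : edge -> R -> R)
    (x : path -> R) : Prop :=
  (forall p, In p Ps -> 0 <= x p) /\ sumL Ps x = 1 /\
  (forall e, In e E -> lt_cap (mu e) (Aop Ps x e)).

(* C* > 1, where C* is the min-cut capacity (capacities possibly +oo):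
   for every cut U the (possibly infinite) sum of the limits exceeds 1 *)
Definition mincut_gt1 (n : nat) (E : list edge) (mu : edge -> R -> R) : Prop :=
  forall U : nat -> bool, U 0%nat = true -> U n = false ->
    exists r, 0 <= r /\
      1 < sumL E (fun e => if U (fst e) && negb (U (snd e)) then mu e r else 0).

Definition dist {I : Type} (idx : list I) (x y : I -> R) : R :=
  sqrt (sumL idx (fun i => (x i - y i) ^ 2)).
Definition closed_in {I : Type} (idx : list I) (S : (I -> R) -> Prop) : Prop :=
  forall x, (forall eps, 0 < eps -> exists y, S y /\ dist idx x y < eps) -> S x.
Definition convex_in {I : Type} (S : (I -> R) -> Prop) : Prop :=
  forall x y l, S x -> S y -> 0 <= l <= 1 -> S (fun i => l * x i + (1 - l) * y i).
(* interior relative to the hyperplane {x : 1'x = 1} *)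
Definition relint {I : Type} (idx : list I) (S : (I -> R) -> Prop) (x : I -> R) : Prop :=
  S x /\ exists eps, 0 < eps /\
    forall y, sumL idx y = 1 -> dist idx x y < eps -> S y.
Definition rbdry {I : Type} (idx : list I) (S : (I -> R) -> Prop) (x : I -> R) : Prop :=
  S x /\ ~ relint idx S x.
Definition diff_on {I : Type} (idx : list I) (D : (I -> R) -> Prop)
    (F : (I -> R) -> R) (dF : (I -> R) -> I -> R) : Prop :=
  forall x, D x -> forall eps, 0 < eps -> exists del, 0 < del /\
    forall y, D y -> dist idx x y < del ->
      Rabs (F y - F x - sumL idx (fun i => dF x i * (y i - x i))) <= eps * dist idx x y.
Definition C1_on {I : Type} (idx : list I) (D : (I -> R) -> Prop)
    (F : (I -> R) -> R) : Prop :=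
  exists dF, diff_on idx D F dF /\
    forall x, D x -> forall i, In i idx -> forall eps, 0 < eps -> exists del, 0 < del /\
      forall y, D y -> dist idx x y < del -> Rabs (dF y i - dF x i) < eps.
Definition strictly_convex_on {I : Type} (idx : list I) (S : (I -> R) -> Prop)
    (h : (I -> R) -> R) : Prop :=
  forall x y l, S x -> S y -> (exists i, In i idx /\ x i <> y i) -> 0 < l < 1 ->
    h (fun i => l * x i + (1 - l) * y i) < l * h x + (1 - l) * h y.
(* || Phi v ||, Phi = I - |P|^{-1} 1 1' *)
Definition proj_norm {I : Type} (idx : list I) (v : I -> R) : R :=
  sqrt (sumL idx (fun i => (v i - sumL idx v / INR (length idx)) ^ 2)).

Definition admissible_perturbation (E : list edge) (Ps : list path)
    (mu : edge -> R -> R) (Pih : (path -> R) -> Prop) (h : (path -> R) -> R) : Prop :=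
  (forall x, Pih x -> InPi E Ps mu x) /\
  closed_in Ps Pih /\ convex_in Pih /\ (exists x, relint Ps Pih x) /\
  strictly_convex_on Ps Pih h /\
  exists g : (path -> R) -> path -> R,
    diff_on Ps (relint Ps Pih) h g /\
    (forall p, In p Ps -> exists dg, diff_on Ps (relint Ps Pih) (fun x => g x p) dg) /\
    (forall M, exists del, 0 < del /\
       forall x b, relint Ps Pih x -> rbdry Ps Pih b -> dist Ps x b < del ->
         M < proj_norm Ps (g x)).

Definition rderiv (g : R -> R) (x l : R) : Prop :=
  limit1_in (fun s => (g (x + s) - g x) / s) (fun s => 0 < s) l 0.

Definition is_delay (m : R -> R) (f tau : R) : Prop :=
  (0 < f /\ exists r, 0 <= r /\ m r = f /\ tau = r / f) \/
  (f = 0 /\ exists d, rderiv m 0 d /\ tau = / d).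

Definition is_Fh (E : list edge) (Ps : list path) (mu : edge -> R -> R)
    (Pih : (path -> R) -> Prop) (h : (path -> R) -> R)
    (f : edge -> R) (w : path -> R) : Prop :=
  Pih w /\ exists tau : edge -> R,
    (forall e, In e E -> is_delay (mu e) (f e) (tau e)) /\
    forall w', Pih w' ->
      sumL E (fun e => Aop Ps w e * tau e) + h w <=
      sumL E (fun e => Aop Ps w' e * tau e) + h w'.

(* local decisions: G v f pi e is G^v_e(f_{E_v^+}, pi); restr feeds only the
   coordinates of E_v^+ *)
Definition restr (E : list edge) (v : nat) (f : edge -> R) : edge -> R :=
  fun e => if existsb (edge_eqb e) (Eout E v) then f e else 0.
Definition Gr (G : nat -> (edge -> R) -> (path -> R) -> edge -> R)
    (E : list edge) (v : nat) (f : edge -> R) (pi : path -> R) (e : edge) : R :=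
  G v (restr E v f) pi e.
Definition inFv (E : list edge) (mu : edge -> R -> R) (v : nat) (f : edge -> R) : Prop :=
  forall e, In e (Eout E v) -> 0 <= f e /\ lt_cap (mu e) (f e).
Definition upd (f : edge -> R) (e : edge) (s : R) : edge -> R :=
  fun e' => if edge_eqb e' e then s else f e'.

Definition local_decisions (n : nat) (E : list edge) (Ps : list path)
    (mu : edge -> R -> R) (G : nat -> (edge -> R) -> (path -> R) -> edge -> R) : Prop :=
  forall v, (v < n)%nat ->
    (forall j, In j (Eout E v) ->
       C1_on (map inl (Eout E v) ++ map inr Ps)
         (fun z : edge + path -> R =>
            inFv E mu v (fun e => z (inl e)) /\ InPi E Ps mu (fun p => z (inr p)))
         (fun z => Gr G E v (fun e => z (inl e)) (fun p => z (inr p)) j)) /\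
    (forall f pi, inFv E mu v f -> InPi E Ps mu pi ->
       (forall e, In e (Eout E v) -> 0 <= Gr G E v f pi e) /\
       sumL (Eout E v) (Gr G E v f pi) = 1) /\
    (forall pi, InPi E Ps mu pi -> forall e, In e (Eout E v) ->
       sumL (Eout E v) (Aop Ps pi) * Gr G E v (Aop Ps pi) pi e = Aop Ps pi e) /\
    (forall pi f j e l, InPi E Ps mu pi -> inFv E mu v f ->
       In j (Eout E v) -> In e (Eout E v) -> j <> e ->
       rderiv (fun s => Gr G E v (upd f e s) pi j) (f e) l -> 0 <= l).

Definition Hval (E : list edge) (G : nat -> (edge -> R) -> (path -> R) -> edge -> R)
    (f : edge -> R) (pi : path -> R) (e : edge) : R :=
  (if Nat.eqb (fst e) 0 then 1 else sumL (Ein E (fst e)) f) * Gr G E (fst e) f pi e - f e.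

Definition deriv0 (g : R -> R) (t l : R) : Prop :=
  forall eps, 0 < eps -> exists del, 0 < del /\
    forall s, 0 <= s -> Rabs (s - t) < del ->
      Rabs (g s - g t - l * (s - t)) <= eps * Rabs (s - t).

Definition flow (mu : edge -> R -> R) (rho : R -> edge -> R) (t : R) : edge -> R :=
  fun e => mu e (rho t e).

Definition admissible_init (E : list edge) (Ps : list path) (mu : edge -> R -> R)
    (pi : R -> path -> R) (rho : R -> edge -> R) : Prop :=
  InPi E Ps mu (pi 0) /\ (forall p, In p Ps -> 0 < pi 0 p) /\
  (forall e, In e E -> 0 < rho 0 e).

Definition solution (E : list edge) (Ps : list path) (mu : edge -> R -> R)
    (G : nat -> (edge -> R) -> (path -> R) -> edge -> R)
    (Pih : (path -> R) -> Prop) (h : (path -> R) -> R) (eta : R)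
    (pi : R -> path -> R) (rho : R -> edge -> R) : Prop :=
  (forall t, 0 <= t -> InPi E Ps mu (pi t) /\ forall e, In e E -> 0 <= rho t e) /\
  (forall t, 0 <= t -> exists w, is_Fh E Ps mu Pih h (flow mu rho t) w /\
     forall p, In p Ps -> deriv0 (fun s => pi s p) t (eta * (w p - pi t p))) /\
  (forall t, 0 <= t -> forall e, In e E ->
     deriv0 (fun s => rho s e) t (Hval E G (flow mu rho t) (pi t) e)).

(* Main.v *)
Require Import Defs.
From Stdlib Require Import Reals List Lra Lia Rtopology Classical ClassicalEpsilon.
Import ListNotations.
Open Scope R_scope.

Fixpoint mkphi (c : nat -> nat -> nat) (k : nat) : nat :=
  match k with O => c O O | S k' => c (S (mkphi c k')) (S k') end.

Lemma strict_mono (f : nat -> nat) : (forall k, (f k < f (S k))%nat) ->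
  forall i j, (i <= j)%nat -> (f i <= f j)%nat.
Proof. intros H i j Hij. induction Hij. lia. specialize (H m). lia. Qed.

Lemma strict_id (f : nat -> nat) : (forall k, (f k < f (S k))%nat) ->
  forall k, (k <= f k)%nat.
Proof. intros H k. induction k. lia. specialize (H k). lia. Qed.

Lemma small_inv (eps : R) : 0 < eps -> exists N, forall k, (N <= k)%nat -> / INR (S k) < eps.
Proof.
  intros He. destruct (archimed_cor1 eps He) as [N [HN HN0]].
  exists N. intros k Hk.
  apply Rle_lt_trans with (/ INR N); auto.
  apply Rinv_le_contravar. apply lt_0_INR; lia. apply le_INR; lia.
Qed.

Lemma sub1 (u : nat -> R) : (forall k, 0 <= u k <= 1) ->
  exists phi : nat -> nat, (forall k, (phi k < phi (S k))%nat) /\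
  exists l, forall eps, 0 < eps -> exists N, forall k, (N <= k)%nat ->
    Rabs (u (phi k) - l) < eps.
Proof.
  intros Hb.
  destruct (Bolzano_Weierstrass u (fun c => 0 <= c <= 1) (compact_P3 0 1) Hb) as [l Hl].
  assert (H : forall N k, exists p, (N <= p)%nat /\ Rabs (u p - l) < / INR (S k)).
  { intros N k.
    assert (Hp : 0 < / INR (S k)) by (apply Rinv_0_lt_compat, lt_0_INR; lia).
    destruct (Hl (disc l (mkposreal _ Hp)) N) as [p [Hp1 Hp2]].
    - exists (mkposreal _ Hp). intros y Hy. exact Hy.
    - exists p. split; auto. }
  set (c := fun N k => proj1_sig (constructive_indefinite_description _ (H N k))).
  assert (Hc : forall N k, (N <= c N k)%nat /\ Rabs (u (c N k) - l) < / INR (S k)).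
  { intros N k. unfold c. destruct (constructive_indefinite_description _ (H N k)); auto. }
  exists (mkphi c). split.
  - intros k. simpl. destruct (Hc (S (mkphi c k)) (S k)). lia.
  - exists l. intros eps He. destruct (small_inv eps He) as [N HN].
    exists N. intros k Hk. destruct k.
    + simpl. destruct (Hc 0%nat 0%nat) as [_ H2]. specialize (HN 0%nat Hk). lra.
    + simpl. destruct (Hc (S (mkphi c k)) (S k)) as [_ H2]. specialize (HN (S k) Hk). lra.
Qed.

Definition path_eq_dec : forall p q : path, {p = q} + {p <> q}.
Proof. repeat decide equality. Defined.

Lemma BW (l : list path) (u : nat -> path -> R) :
  (forall k p, In p l -> 0 <= u k p <= 1) ->
  exists phi : nat -> nat, (forall k, (phi k < phi (S k))%nat) /\
  exists lim : path -> R, forall eps, 0 < eps -> exists N, forall k, (N <= k)%nat ->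
    forall p, In p l -> Rabs (u (phi k) p - lim p) < eps.
Proof.
  induction l as [|a l IH]; intros Hb.
  - exists S. split. intros; lia. exists (fun _ => 0). intros eps He. exists O.
    intros k _ p [].
  - destruct IH as [phi1 [Hphi1 [lim1 Hlim1]]].
    { intros k p Hp. apply Hb. right; auto. }
    destruct (sub1 (fun k => u (phi1 k) a)) as [phi2 [Hphi2 [la Hla]]].
    { intros k. apply Hb. left; auto. }
    exists (fun k => phi1 (phi2 k)). split.
    + intros k. specialize (Hphi2 k).
      assert (H := strict_mono phi1 Hphi1 (S (phi2 k)) (phi2 (S k)) Hphi2).
      specialize (Hphi1 (phi2 k)). lia.
    + exists (fun p => if path_eq_dec p a then la else lim1 p).
      intros eps He. destruct (Hlim1 eps He) as [N1 HN1]. destruct (Hla eps He) as [N2 HN2].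
      exists (Nat.max N1 N2). intros k Hk p Hp.
      destruct (path_eq_dec p a) as [->|Hne].
      * apply HN2. lia.
      * destruct Hp as [Hp|Hp]. congruence.
        apply HN1; auto. pose proof (strict_id phi2 Hphi2 k). lia.
Qed.

Lemma sumL_le {A} (l : list A) f g : (forall x, In x l -> f x <= g x) -> sumL l f <= sumL l g.
Proof. induction l; simpl; intros H. lra. apply Rplus_le_compat. apply H; auto. apply IHl; auto. Qed.

Lemma sumL_ge0 {A} (l : list A) f : (forall x, In x l -> 0 <= f x) -> 0 <= sumL l f.
Proof. induction l; simpl; intros H. lra. assert (0 <= f a) by auto. assert (0 <= sumL l f) by auto. lra. Qed.

Lemma sumL_term {A} (l : list A) f x : (forall y, In y l -> 0 <= f y) -> In x l -> f x <= sumL l f.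
Proof.
  induction l; simpl; intros H Hx. destruct Hx.
  destruct Hx as [->|Hx].
  - assert (0 <= sumL l f) by (apply sumL_ge0; auto). lra.
  - assert (0 <= f a) by auto. assert (f x <= sumL l f) by auto. lra.
Qed.

Lemma sumL_bound {A} (l : list A) f d : (forall x, In x l -> f x <= d) -> sumL l f <= INR (length l) * d.
Proof.
  induction l; simpl; intros H. lra.
  assert (f a <= d) by auto. assert (sumL l f <= INR (length l) * d) by auto.
  destruct (length l); simpl in *; lra.
Qed.

Lemma sumL_abs {A} (l : list A) f : Rabs (sumL l f) <= sumL l (fun x => Rabs (f x)).
Proof. induction l; simpl. rewrite Rabs_R0; lra. eapply Rle_trans. apply Rabs_triang. lra. Qed.

Lemma sumL_minus {A} (l : list A) f g : sumL l f - sumL l g = sumL l (fun x => f x - g x).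
Proof. induction l; simpl. lra. rewrite <- IHl. lra. Qed.

Lemma Aop_le_sum Ps w e : (forall p, In p Ps -> 0 <= w p) -> Aop Ps w e <= sumL Ps w.
Proof. intros H. apply sumL_le. intros p Hp. destruct (memb e p). lra. auto. Qed.

Lemma Aop_diff Ps x y e : Rabs (Aop Ps x e - Aop Ps y e) <= sumL Ps (fun p => Rabs (x p - y p)).
Proof.
  unfold Aop. rewrite sumL_minus. eapply Rle_trans. apply sumL_abs.
  apply sumL_le. intros p _. destruct (memb e p). lra. replace (0-0) with 0 by ring.
  rewrite Rabs_R0. apply Rabs_pos.
Qed.

Lemma dist_small (l : list path) x y eps : 0 < eps ->
  (forall p, In p l -> Rabs (x p - y p) < eps / (INR (length l) + 1)) -> Defs.dist l x y < eps.
Proof.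
  intros He H. set (d := eps / (INR (length l) + 1)).
  assert (Hl : 0 <= INR (length l)) by apply pos_INR.
  assert (Hd : 0 < d) by (unfold d; apply Rdiv_lt_0_compat; lra).
  assert (Hde : d * (INR (length l) + 1) = eps) by (unfold d; field; lra).
  assert (Hs : sumL l (fun i => (x i - y i) ^ 2) <= INR (length l) * (d * d)).
  { apply sumL_bound. intros p Hp. specialize (H p Hp). fold d in H.
    rewrite <- (pow2_abs (x p - y p)). assert (0 <= Rabs (x p - y p)) by apply Rabs_pos. nra. }
  unfold Defs.dist. rewrite <- (sqrt_pow2 eps) by lra.
  apply sqrt_lt_1_alt. split. apply sumL_ge0; intros; apply pow2_ge_0. nra.
Qed.

Lemma maximizer (E : list edge) Ps mu (Pih : (path -> R) -> Prop) e :
  (forall x, Pih x -> InPi E Ps mu x) -> closed_in Ps Pih -> (exists x, Pih x) ->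
  exists ws, Pih ws /\ forall w, Pih w -> Aop Ps w e <= Aop Ps ws e.
Proof.
  intros Hsub Hcl Hne.
  assert (Hb : forall w, Pih w -> (forall p, In p Ps -> 0 <= w p <= 1) /\ Aop Ps w e <= 1).
  { intros w Hw. destruct (Hsub w Hw) as [H1 [H2 _]]. split.
    - intros p Hp. split. auto. rewrite <- H2. apply sumL_term; auto.
    - rewrite <- H2. apply Aop_le_sum; auto. }
  set (SS := fun x => exists w, Pih w /\ x = Aop Ps w e).
  destruct (completeness SS) as [s [Hs1 Hs2]].
  { exists 1. intros x [w [Hw ->]]. apply Hb; auto. }
  { destruct Hne as [w Hw]. exists (Aop Ps w e). exists w; auto. }
  assert (Happ : forall k : nat, exists w, Pih w /\ s - / INR (S k) < Aop Ps w e).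
  { intros k. apply NNPP. intros Hn.
    assert (Hp : 0 < / INR (S k)) by (apply Rinv_0_lt_compat, lt_0_INR; lia).
    assert (s <= s - / INR (S k)). { apply Hs2. intros x [w [Hw ->]].
      apply Rnot_lt_le. intros Hlt. apply Hn. exists w; auto. }
    lra. }
  set (u := fun k => proj1_sig (constructive_indefinite_description _ (Happ k))).
  assert (Hu : forall k, Pih (u k) /\ s - / INR (S k) < Aop Ps (u k) e).
  { intros k. unfold u. destruct (constructive_indefinite_description _ (Happ k)); auto. }
  destruct (BW Ps u) as [phi [Hphi [ws Hws]]].
  { intros k p Hp. apply (Hb (u k) (proj1 (Hu k))); auto. }
  assert (Hlen : 0 <= INR (length Ps)) by apply pos_INR.
  assert (Hin : Pih ws).
  { apply Hcl. intros eps He.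
    destruct (Hws (eps / (INR (length Ps) + 1))) as [N HN].
    { apply Rdiv_lt_0_compat; lra. }
    exists (u (phi N)). split. apply Hu. apply dist_small; auto.
    intros p Hp. rewrite Rabs_minus_sym. apply HN; auto. }
  exists ws. split; auto.
  assert (Hsw : s <= Aop Ps ws e).
  { apply Rnot_lt_le. intros Hlt. set (g := s - Aop Ps ws e).
    assert (Hg : 0 < g) by (unfold g; lra).
    destruct (Hws (g / (2 * (INR (length Ps) + 1)))) as [N1 HN1].
    { apply Rdiv_lt_0_compat; lra. }
    destruct (small_inv (g / 2)) as [N2 HN2]. lra.
    set (k := Nat.max N1 N2).
    assert (H1 : s - / INR (S (phi k)) < Aop Ps (u (phi k)) e) by apply Hu.
    assert (H2 : / INR (S (phi k)) < g / 2).
    { apply HN2. pose proof (strict_id phi Hphi k). unfold k in *. lia. }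
    assert (H3 : Rabs (Aop Ps (u (phi k)) e - Aop Ps ws e) <= INR (length Ps) * (g / (2 * (INR (length Ps) + 1)))).
    { eapply Rle_trans. apply Aop_diff. apply sumL_bound. intros p Hp. left. apply HN1; auto. unfold k; lia. }
    assert (H4 : INR (length Ps) * (g / (2 * (INR (length Ps) + 1))) < g / 2).
    { apply Rmult_lt_reg_r with (2 * (INR (length Ps) + 1)). lra.
      field_simplify; try lra. }
    assert (H5 := Rle_abs (Aop Ps (u (phi k)) e - Aop Ps ws e)). unfold g in *. lra. }
  intros w Hw. apply Rle_trans with s; auto. apply Hs1. exists w; auto.
Qed.

Lemma deriv0_cont g t l : deriv0 g t l -> forall eps, 0 < eps -> exists del, 0 < del /\
  forall s, 0 <= s -> Rabs (s - t) < del -> Rabs (g s - g t) < eps.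
Proof.
  intros H eps He. destruct (H 1 Rlt_0_1) as [del [Hd Hdel]].
  set (d := Rmin del (eps / (Rabs l + 2))).
  assert (Hl : 0 <= Rabs l) by apply Rabs_pos.
  assert (Hq : 0 < eps / (Rabs l + 2)) by (apply Rdiv_lt_0_compat; lra).
  exists d. split. unfold d; apply Rmin_pos; lra.
  intros s Hs Hst.
  assert (Hst1 : Rabs (s - t) < del) by (eapply Rlt_le_trans; [exact Hst|apply Rmin_l]).
  assert (Hst2 : Rabs (s - t) < eps / (Rabs l + 2)) by (eapply Rlt_le_trans; [exact Hst|apply Rmin_r]).
  specialize (Hdel s Hs Hst1).
  replace (g s - g t) with ((g s - g t - l * (s - t)) + l * (s - t)) by ring.
  eapply Rle_lt_trans. apply Rabs_triang. rewrite Rabs_mult.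
  assert (Ha : 0 <= Rabs (s - t)) by apply Rabs_pos.
  assert (Rabs (s - t) * (Rabs l + 2) < eps).
  { apply Rmult_lt_reg_r with (/ (Rabs l + 2)). apply Rinv_0_lt_compat; lra.
    rewrite Rmult_assoc, Rinv_r by lra. lra. }
  nra.
Qed.

Lemma deriv0_plus f g t a b : deriv0 f t a -> deriv0 g t b -> deriv0 (fun s => f s + g s) t (a + b).
Proof.
  intros Hf Hg eps He. destruct (Hf (eps/2)) as [d1 [Hd1 H1]]. lra.
  destruct (Hg (eps/2)) as [d2 [Hd2 H2]]. lra.
  exists (Rmin d1 d2). split. apply Rmin_pos; lra. intros s Hs Hst.
  assert (A1 : Rabs (s - t) < d1) by (eapply Rlt_le_trans; [exact Hst|apply Rmin_l]).
  assert (A2 : Rabs (s - t) < d2) by (eapply Rlt_le_trans; [exact Hst|apply Rmin_r]).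
  specialize (H1 s Hs A1). specialize (H2 s Hs A2).
  replace (f s + g s - (f t + g t) - (a + b) * (s - t)) with
    ((f s - f t - a * (s - t)) + (g s - g t - b * (s - t))) by ring.
  eapply Rle_trans. apply Rabs_triang. lra.
Qed.

Lemma deriv0_scal f t a c : deriv0 f t a -> deriv0 (fun s => c * f s) t (c * a).
Proof.
  intros Hf eps He. destruct (Hf (eps / (Rabs c + 1))) as [d [Hd H]].
  { apply Rdiv_lt_0_compat. lra. pose proof (Rabs_pos c); lra. }
  exists d. split; auto. intros s Hs Hst. specialize (H s Hs Hst).
  replace (c * f s - c * f t - c * a * (s - t)) with (c * (f s - f t - a * (s - t))) by ring.
  rewrite Rabs_mult. pose proof (Rabs_pos c). pose proof (Rabs_pos (s - t)).
  pose proof (Rabs_pos (f s - f t - a * (s - t))).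
  assert (Rabs c * (eps / (Rabs c + 1)) <= eps).
  { apply Rmult_le_reg_r with (Rabs c + 1). lra. field_simplify; lra. }
  assert (Rabs c * Rabs (f s - f t - a * (s - t)) <= Rabs c * (eps / (Rabs c + 1) * Rabs (s - t))) by
    (apply Rmult_le_compat_l; auto).
  nra.
Qed.

Lemma deriv0_const t c : deriv0 (fun _ => c) t 0.
Proof. intros eps He. exists 1. split. lra. intros s _ _.
  replace (c - c - 0 * (s - t)) with 0 by ring. rewrite Rabs_R0.
  pose proof (Rabs_pos (s - t)). nra. Qed.

Lemma deriv0_sumL {A} (l : list A) (F : R -> A -> R) d t :
  (forall p, In p l -> deriv0 (fun s => F s p) t (d p)) ->
  deriv0 (fun s => sumL l (F s)) t (sumL l d).
Proof.
  induction l; simpl; intros H.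
  - apply deriv0_const.
  - apply (deriv0_plus (fun s => F s a) (fun s => sumL l (F s))); auto.
Qed.

Lemma deriv0_of_lim f t l : derivable_pt_lim f t l -> deriv0 f t l.
Proof.
  intros H eps He. destruct (H eps He) as [del Hdel]. exists del. split. apply cond_pos.
  intros s _ Hst. destruct (Req_dec s t) as [->|Hne].
  - replace (f t - f t - l * (t - t)) with 0 by ring. rewrite Rabs_R0, Rminus_diag, Rabs_R0. lra.
  - assert (Hh : s - t <> 0) by lra. specialize (Hdel (s - t) Hh Hst).
    replace (t + (s - t)) with s in Hdel by ring.
    replace (f s - f t - l * (s - t)) with (((f s - f t) / (s - t) - l) * (s - t)) by (field; auto).
    rewrite Rabs_mult. pose proof (Rabs_pos (s - t)). nra.
Qed.

Lemma expneg_deriv eta t : derivable_pt_lim (fun t => exp (-eta*t)) t (-eta * exp(-eta*t)).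
Proof.
  replace (-eta * exp(-eta*t)) with (exp (-eta*t) * (-eta*1)) by ring.
  apply (derivable_pt_lim_comp (fun t => -eta*t) exp).
  apply (derivable_pt_lim_scal id). apply derivable_pt_lim_id. apply derivable_pt_lim_exp.
Qed.

Lemma barrier (c : R -> R) : c 0 < 0 ->
  (forall t, 0 <= t -> exists l, deriv0 c t l /\ (c t = 0 -> l < 0)) ->
  forall t, 0 <= t -> c t < 0.
Proof.
  intros H0 Hd T HT. apply Rnot_le_lt. intros HcT.
  set (A := fun x => 0 <= x <= T /\ forall s, 0 <= s <= x -> c s < 0).
  destruct (completeness A) as [ts [Hub Hlub]].
  { exists T. intros x [[_ Hx] _]. auto. }
  { exists 0. split. lra. intros s Hs. replace s with 0 by lra. auto. }
  assert (HA0 : A 0). { split. lra. intros s Hs. replace s with 0 by lra. auto. }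
  assert (Hts0 : 0 <= ts) by (apply Hub; auto).
  assert (HtsT : ts <= T). { apply Hlub. intros x [[_ Hx] _]. auto. }
  assert (F1 : forall s, 0 <= s < ts -> c s < 0).
  { intros s Hs. apply Rnot_le_lt. intros Hcs.
    assert (ts <= s). { apply Hlub. intros x [Hx Hx2]. apply Rnot_lt_le. intros Hlt.
      specialize (Hx2 s). lra. }
    lra. }
  destruct (Hd ts Hts0) as [l [Hl Hl0]].
  destruct (Rtotal_order (c ts) 0) as [Hn|[Hz|Hp]].
  - destruct (deriv0_cont c ts l Hl (- c ts)) as [del [Hdel Hc]]. lra.
    destruct (Req_dec ts T) as [->|HneT]. lra.
    set (x := Rmin T (ts + del/2)).
    assert (Hx1 : ts < x) by (unfold x; apply Rmin_glb_lt; lra).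
    assert (Hx2 : x <= ts + del/2) by apply Rmin_r.
    assert (A x).
    { split. split. lra. apply Rmin_l. intros s Hs.
      destruct (Rlt_le_dec s ts). apply F1; lra.
      specialize (Hc s (proj1 Hs)). assert (Rabs (s - ts) < del) by (rewrite Rabs_right; lra).
      specialize (Hc H). assert (H1 := Rle_abs (c s - c ts)). lra. }
    specialize (Hub x H). lra.
  - assert (Htp : 0 < ts). { destruct Hts0 as [|<-]; auto. lra. }
    specialize (Hl0 Hz). destruct (Hl (- l / 2)) as [del [Hdel H]]. lra.
    set (s := Rmax 0 (ts - del/2)).
    assert (Hs1 : 0 <= s) by apply Rmax_l.
    assert (Hs2 : s < ts) by (unfold s; apply Rmax_lub_lt; lra).
    assert (Hs3 : ts - del/2 <= s) by apply Rmax_r.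
    assert (Habs : Rabs (s - ts) = ts - s) by (rewrite Rabs_left; lra).
    specialize (H s Hs1). rewrite Habs in H. specialize (H ltac:(lra)).
    rewrite Hz in H. assert (H1 := Rle_abs (c s - 0 - l * (s - ts))).
    specialize (F1 s (conj Hs1 Hs2)).
    assert (Hpos : 0 < (-l/2)*(ts - s)) by (apply Rmult_lt_0_compat; lra).
    clearbody s A. assert (Heq : l * (s - ts) = 2 * (- l / 2 * (ts - s))) by field. rewrite Heq in H1, H. set (P := - l / 2 * (ts - s)) in *. clearbody P. pose proof (Rle_abs (-(c s - 0 - 2*P))) as H2. rewrite Rabs_Ropp in H2. lra.
  - assert (Htp : 0 < ts). { destruct Hts0 as [|<-]; auto. lra. }
    destruct (deriv0_cont c ts l Hl (c ts)) as [del [Hdel Hc]]. lra.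
    set (s := Rmax 0 (ts - del/2)).
    assert (Hs1 : 0 <= s) by apply Rmax_l.
    assert (Hs2 : s < ts) by (unfold s; apply Rmax_lub_lt; lra).
    assert (Hs3 : ts - del/2 <= s) by apply Rmax_r.
    assert (Habs : Rabs (s - ts) < del) by (rewrite Rabs_left; lra).
    specialize (Hc s Hs1 Habs). assert (H1 := Rle_abs (- (c s - c ts))). rewrite Rabs_Ropp in H1.
    specialize (F1 s (conj Hs1 Hs2)). lra.
Qed.

Lemma decay (a : R -> R) eta m dlt : 0 < eta -> 0 < dlt -> a 0 <= 1 ->
  (forall t, 0 <= t -> exists q, q <= m /\ deriv0 a t (eta * (q - a t))) ->
  forall t, 0 <= t -> a t < m + (1 + Rabs m) * exp (- eta * t) + dlt.
Proof.
  intros He Hd Ha0 Hder.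
  set (K := 1 + Rabs m).
  set (c := fun t => a t + (- K) * exp (- eta * t) + - (m + dlt)).
  assert (Hc : forall t, 0 <= t -> c t < 0).
  { apply barrier.
    - unfold c, K. replace (- eta * 0) with 0 by ring. rewrite exp_0.
      pose proof (Rle_abs (-m)). rewrite Rabs_Ropp in H. lra.
    - intros t Ht. destruct (Hder t Ht) as [q [Hq Hdq]].
      exists (eta * (q - a t) + (- K) * (- eta * exp (- eta * t)) + 0). split.
      + unfold c. apply deriv0_plus. apply deriv0_plus. auto.
        apply (deriv0_scal (fun t => exp (- eta * t))). apply deriv0_of_lim, expneg_deriv.
        apply deriv0_const.
      + unfold c. intros Hz. nra. }
  intros t Ht. specialize (Hc t Ht). unfold c in Hc. fold K. replace ((-K)*exp(-eta*t)) with (-(K*exp(-eta*t))) in Hc by ring. lra.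
Qed.

Lemma sumL_deriv_val Ps e eta (w x : path -> R) :
  sumL Ps (fun p => if memb e p then eta * (w p - x p) else 0) = eta * (Aop Ps w e - Aop Ps x e).
Proof. unfold Aop. induction Ps; simpl. ring. rewrite IHPs. destruct (memb e a); ring. Qed.

Lemma tail_bound K dlt eta t : 1 <= K -> 0 < dlt -> 0 < eta ->
  2 * K / (dlt * eta) <= t -> K * exp (- eta * t) <= dlt / 2.
Proof.
  intros HK Hd He Ht.
  assert (Hq : 0 < 2 * K / (dlt * eta)) by (apply Rdiv_lt_0_compat; nra).
  assert (Het : 2 * K / dlt <= eta * t).
  { replace (2 * K / dlt) with (eta * (2 * K / (dlt * eta))) by (field; lra).
    apply Rmult_le_compat_l; lra. }
  assert (Hx : eta * t < exp (eta * t)) by (pose proof (exp_ineq1 (eta * t)); assert (eta * t <> 0) by nra; specialize (H H0); lra).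
  replace (- eta * t) with (- (eta * t)) by ring. rewrite exp_Ropp.
  assert (Hpos : 0 < exp (eta * t)) by apply exp_pos.
  apply Rmult_le_reg_r with (exp (eta * t)); auto.
  rewrite Rmult_assoc, Rinv_l by lra.
  assert (2 * K <= dlt * (eta * t)).
  { apply Rmult_le_reg_r with (/ dlt). apply Rinv_0_lt_compat; lra.
    replace (dlt * (eta * t) * / dlt) with (eta * t) by (field; lra). exact Het. }
  nra.
Qed.

Theorem lemma4 (n : nat) (E : list edge) (Ps : list path) (mu : edge -> R -> R)
    (Pih : (path -> R) -> Prop) (h : (path -> R) -> R) :
  network n E -> paths_spec n E Ps ->
  (forall e, In e E -> flow_density (mu e)) -> mincut_gt1 n E mu ->
  admissible_perturbation E Ps mu Pih h ->
  exists Cbar : edge -> R, (forall e, In e E -> lt_cap (mu e) (Cbar e)) /\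
  forall G : nat -> (edge -> R) -> (path -> R) -> edge -> R,
    local_decisions n E Ps mu G ->
    forall eta, 0 < eta -> exists t0, 0 <= t0 /\
      forall (pi : R -> path -> R) (rho : R -> edge -> R),
        admissible_init E Ps mu pi rho -> solution E Ps mu G Pih h eta pi rho ->
        forall t, t0 <= t -> forall e, In e E -> Aop Ps (pi t) e <= Cbar e.
Proof.
  intros _ _ _ _ Hadm.
  destruct Hadm as [Hsub [Hcl [_ [[x0 [Hx0 _]] _]]]].
  assert (Hex : forall e, exists mc : R * R, In e E ->
     (forall w, Pih w -> Aop Ps w e <= fst mc) /\ fst mc < snd mc /\ lt_cap (mu e) (snd mc)).
  { intros e. destruct (maximizer E Ps mu Pih e Hsub Hcl (ex_intro _ x0 Hx0)) as [ws [Hws Hmax]].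
    destruct (Hsub ws Hws) as [_ [_ Hcap]].
    destruct (classic (In e E)) as [He|He].
    - destruct (Hcap e He) as [r [Hr Hlt]].
      exists (Aop Ps ws e, (Aop Ps ws e + mu e r) / 2). intros _. simpl.
      split; auto. split. lra. exists r. split; auto. lra.
    - exists (0, 0). intros H; contradiction. }
  set (fe := fun e => proj1_sig (constructive_indefinite_description _ (Hex e))).
  assert (Hfe : forall e, In e E ->
     (forall w, Pih w -> Aop Ps w e <= fst (fe e)) /\ fst (fe e) < snd (fe e) /\ lt_cap (mu e) (snd (fe e))).
  { intros e. unfold fe. destruct (constructive_indefinite_description _ (Hex e)); auto. }
  exists (fun e => snd (fe e)). split.
  { intros e He. apply Hfe; auto. }
  intros G _ eta Heta.
  set (Te := fun e => 2 * (1 + Rabs (fst (fe e))) / ((snd (fe e) - fst (fe e)) * eta)).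
  assert (HTe : forall e, In e E -> 0 <= Te e).
  { intros e He. destruct (Hfe e He) as [_ [Hlt _]]. unfold Te. left.
    apply Rdiv_lt_0_compat. pose proof (Rabs_pos (fst (fe e))). lra.
    apply Rmult_lt_0_compat; lra. }
  exists (sumL E Te). split. apply sumL_ge0; auto.
  intros pi rho Hinit Hsol t Ht e He.
  destruct (Hfe e He) as [Hm [Hlt _]].
  set (m := fst (fe e)) in *. set (Cb := snd (fe e)) in *.
  assert (HTt : Te e <= t) by (eapply Rle_trans; [apply sumL_term; eauto|exact Ht]).
  assert (Ht0 : 0 <= t) by (pose proof (HTe e He); lra).
  assert (Hdec := decay (fun s => Aop Ps (pi s) e) eta m ((Cb - m)/2) Heta ltac:(lra)).
  assert (Ha : Aop Ps (pi t) e < m + (1 + Rabs m) * exp (- eta * t) + (Cb - m) / 2).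
  { apply Hdec; auto.
    - destruct Hinit as [[Hnn [Hs _]] _]. rewrite <- Hs. apply Aop_le_sum; auto.
    - intros s Hs. destruct Hsol as [_ [Hw _]]. destruct (Hw s Hs) as [w [[Hpw _] Hd]].
      exists (Aop Ps w e). split. apply Hm; auto.
      rewrite <- sumL_deriv_val. unfold Aop.
      apply (deriv0_sumL Ps (fun s p => if memb e p then pi s p else 0)).
      intros p Hp. destruct (memb e p). apply Hd; auto. apply deriv0_const. }
  assert (Hk : (1 + Rabs m) * exp (- eta * t) <= (Cb - m) / 2).
  { apply tail_bound; auto. pose proof (Rabs_pos m); lra. lra. }
  lra.
Qed.
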